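(* Let $q$ be an odd prime power with characteristic $p$, let $1\le n\le q^2-1$, and write $n=u+vq$ with $0\le u,v\le q-1$. Define \[ \mathrm{III}=\sum_{\substack{\alpha,\beta\ge 0,\ \beta\le q-2\\ 0<\alpha+\beta\le q-1}}\ \sum_{\substack{k\ge 1,\ j\ge 0\\ k+j\le q-1\\ 2k-j\equiv\alpha+\beta\pmod{q-1}\\ q(q-1)+k-j-(\alpha+\beta q)=n}}\binom{\alpha+\beta}{\alpha}\binom{q-1-k}{j}(-1)^j . \] Then in $\mathbb F_p$, \[ \mathrm{III}=\sum_{\substack{-1\le s\le 1\\ \max\{s-\frac{u+v}{q-1},\,v-q+1\}\le\epsilon<\min\{s-\frac{u+v}{q-1}+1,\,v\}}}(-1)^{v+\epsilon}\binom{u+2v-(s-\epsilon)(q-1)-\epsilon}{(s-2\epsilon+1)(q-1)-2u-v-\epsilon} -\sum_{\max\{-2,\,v-q+\frac{u+v}{q-1}\}<s\le\min\{1,\,v-q+\frac{u+v}{q-1}+1\}}\binom{u+v-(s-v+q-1)(q-1)}{(s-2v+2q)(q-1)-2(u+v)}, \] the sums being over integers $s,\epsilon$ in the indicated ranges.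
   Context: For integers $m\ge 0$ and $k$, $\binom mk$ is the usual binomial coefficient, equal to $0$ unless $0\le k\le m$; integers are interpreted in $\mathbb F_p$. *)

(* Defs.v *)
From HB Require Import structures.
From mathcomp Require Import all_boot all_order all_algebra.
Set Implicit Arguments. Unset Strict Implicit. Unset Printing Implicit Defensive.
Import Order.TTheory GRing.Theory Num.Theory.
Local Open Scope ring_scope.

Definition binz (m k : int) : nat :=
  if (0 <= k) && (k <= m) then 'C(absz m, absz k) else 0%N.

Definition irange (a b : int) : seq int :=
  [seq a + (i%:Z) | i <- iota 0 (absz (b - a + 1))].

(* Main.v *)
Require Import Defs.
From HB Require Import structures.
From mathcomp Require Import all_boot all_order all_algebra.
From mathcomp Require Import zify ring lra.
Set Implicit Arguments. Unset Strict Implicit. Unset Printing Implicit Defensive.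
Import Order.TTheory GRing.Theory Num.Theory.
Local Open Scope ring_scope.

Lemma triangle (V : nmodType) (q : nat) (G : nat -> nat -> V) :
  \sum_(0 <= c < q) \sum_(0 <= i < c.+1) G c i =
  \sum_(0 <= a < q) \sum_(0 <= b < q | (a + b < q)%N) G (a + b)%N a.
Proof.
transitivity (\sum_(0 <= c < q) \sum_(0 <= i < q | (i <= c)%N) G c i).
  rewrite !big_nat; apply: eq_bigr => c /andP[_ hc].
  by rewrite (big_nat_widen _ _ _ _ _ hc).
rewrite (exchange_big_dep_nat xpredT) //; apply: eq_bigr => i _.
rewrite big_mkord.
transitivity (\sum_(i <= c < q) G c i).
  by rewrite big_geq_mkord.
rewrite -{1}(add0n i) big_addn.
rewrite (big_nat_widen 0 (q - i) q _ _ (leq_subr i q)).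
apply: eq_big => b; first by rewrite ltn_subRL addnC.
by rewrite addnC.
Qed.

Lemma coef_1mX (R : comNzRingType) (K t : nat) :
  ((1 - 'X)^+K : {poly R})`_t = (-1)^+t * ('C(K,t))%:R.
Proof.
elim: K t => [|K IH] t.
  by rewrite expr0 coef1; case: t => [|t] //=; rewrite ?expr0 ?mul1r // mulr0.
rewrite exprS mulrBl mul1r coefB coefXM IH.
case: t => [|t] /=; first by rewrite subr0 !bin0.
by rewrite IH binS natrD exprS mulrDr; ring.
Qed.

Lemma coef_1pX (R : comNzRingType) (K t : nat) :
  ((1 + 'X)^+K : {poly R})`_t = ('C(K,t))%:R.
Proof.
elim: K t => [|K IH] t.
  by rewrite expr0 coef1; case: t.
rewrite exprS mulrDl mul1r coefD coefXM IH.
case: t => [|t] /=; first by rewrite addr0 !bin0.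
by rewrite IH binS natrD addrC.
Qed.

Definition coefz (R : nzRingType) (P : {poly R}) (t : int) : R :=
  if (0 <= t) then P`_(absz t) else 0.

Lemma coefzD (R : nzRingType) (P Q : {poly R}) t : coefz (P + Q) t = coefz P t + coefz Q t.
Proof. by rewrite /coefz; case: ifP; rewrite ?coefD ?addr0. Qed.

Lemma coefzB (R : nzRingType) (P Q : {poly R}) t : coefz (P - Q) t = coefz P t - coefz Q t.
Proof. by rewrite /coefz; case: ifP; rewrite ?coefB ?subr0. Qed.

Lemma coefz0 (R : nzRingType) t : coefz (0 : {poly R}) t = 0.
Proof. by rewrite /coefz coef0; case: ifP. Qed.

Lemma coefz_sum (R : nzRingType) (I : Type) (r : seq I) (P : pred I) (G : I -> {poly R}) t :
  coefz (\sum_(i <- r | P i) G i) t = \sum_(i <- r | P i) coefz (G i) t.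
Proof.
elim/big_rec2: _ => [|i y Q _ <-]; first exact: coefz0.
by rewrite coefzD.
Qed.

Lemma coefzMn (R : nzRingType) (P : {poly R}) t k : coefz (P *+ k) t = coefz P t *+ k.
Proof. by rewrite /coefz; case: ifP; rewrite ?coefMn ?mul0rn. Qed.

Lemma coefzXnM (R : nzRingType) (P : {poly R}) (e : nat) t :
  coefz ('X^e * P) t = coefz P (t - e%:Z).
Proof.
rewrite /coefz coefXnM; case: (ltnP (absz t) e) => h.
  case: ifP => // h0; case: ifP => // h1; lia.
case: ifP => h0; case: ifP => h1 //; try lia.
by congr (P`_ _); lia.
Qed.

Lemma coefz_1mX (R : comNzRingType) (K : nat) (t : int) :
  coefz ((1 - 'X)^+K : {poly R}) t = (-1)^+(absz t) * (binz K t)%:R.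
Proof.
rewrite /coefz /binz coef_1mX; case: ifP => h0 /=; last by rewrite mulr0.
case: ifP => h1 //; rewrite bin_small ?mulr0 //; lia.
Qed.

Lemma big_nat_recr' (V : nmodType) m n (G : nat -> V) : (m < n)%N ->
  \sum_(m <= i < n) G i = \sum_(m <= i < n.-1) G i + G n.-1.
Proof. by case: n => // n /= h; rewrite big_nat_recr. Qed.

Lemma rearr (V : zmodType) (A BC g0 g1 : V) : A + BC = g0 + (A + g1) + BC - g0 - g1.
Proof. Abort.

Lemma filt_split (V : comNzRingType) (q : nat) (G : nat -> nat -> V) : (1 < q)%N ->
  \sum_(0 <= a < q) \sum_(0 <= b < q | [&& (b <= q - 2)%N, (0 < a + b)%N & (a + b <= q - 1)%N]) G a b
  = \sum_(0 <= a < q) \sum_(0 <= b < q | (a + b < q)%N) G a b - G 0%N 0%N - G 0%N (q - 1)%N.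
Proof.
move=> q1.
rewrite !(big_ltn (ltnW q1)).
have -> : \sum_(1 <= a < q) \sum_(0 <= b < q | [&& (b <= q - 2)%N, (0 < a + b)%N & (a + b <= q - 1)%N]) G a b
  = \sum_(1 <= a < q) \sum_(0 <= b < q | (a + b < q)%N) G a b.
  apply: eq_big_nat => a ha; apply: eq_bigl => b; apply/idP/idP.
    by case/and3P => *; lia.
  by move=> h; apply/and3P; split; lia.
rewrite [in RHS]big_mkcond [in LHS]big_mkcond /=.
rewrite !(big_ltn (ltnW q1)) /= !(big_nat_recr' _ q1) /=.
have -> : \sum_(1 <= i < q.-1) (if [&& (i <= q - 2)%N, (0 < i)%N & (i <= q - 1)%N] then G 0%N i else 0)
   = \sum_(1 <= i < q.-1) (if (0 + i < q)%N then G 0%N i else 0).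
  apply: eq_big_nat => i hi; have -> : [&& (i <= q - 2)%N, (0 < i)%N & (i <= q - 1)%N] by apply/and3P; split; lia.
  by have -> : (0 + i < q)%N by lia.
have -> : [&& (q.-1 <= q - 2)%N, (0 < q.-1)%N & (q.-1 <= q - 1)%N] = false by lia.
have -> : (q.-1 < q)%N by lia.
rewrite (_ : q.-1 = q - 1)%N; last by lia.
rewrite addr0 {1}ssrnat.add0n (ltnW q1).
ring.
Qed.

Section Fp.
Variables (p m : nat).
Hypothesis hp : prime p.
Local Notation q := (p ^ m)%N.
Local Notation F := 'F_p.

Lemma charP : [pchar {poly F}].-nat q.
Proof.
rewrite pnatX ?(pnatE _ hp) //= ?orbT.
by rewrite pchar_poly (pchar_Fp hp).
Qed.

Lemma frobq (x y : {poly F}) : (x + y) ^+ q = x ^+ q + y ^+ q.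
Proof. exact: exprDn_pchar charP. Qed.

Lemma binq0 i : (0 < i < q)%N -> ('C(q, i))%:R = 0 :> F.
Proof.
move=> /andP[h1 h2].
have := coef_1pX F q i; rewrite frobq expr1n coefD coef1 coefXn.
by rewrite (gtn_eqF h1) (ltn_eqF h2) add0r => <-.
Qed.

Lemma binq1 i : (i < q)%N -> (-1)^+i * ('C(q.-1, i))%:R = 1 :> F.
Proof.
have q0 : (0 < q)%N by rewrite expn_gt0 prime_gt0.
elim: i => [|i IH] hi; first by rewrite expr0 bin0 mul1r.
have := binq0 (i := i.+1); rewrite hi /= => /(_ isT).
rewrite -{1}(prednK q0) binS natrD => /eqP; rewrite addr_eq0 => /eqP ->.
by rewrite exprS mulrN -mulrA mulN1r opprK IH // ltnW.
Qed.

Hypothesis hodd : odd p.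
Hypothesis hm : (0 < m)%N.

Lemma oddq : odd q.
Proof. by rewrite oddX hodd orbT. Qed.

Lemma q_gt1 : (1 < q)%N.
Proof. by rewrite -(expn0 p) ltn_exp2l ?prime_gt1. Qed.

Lemma geomq (y : {poly F}) : y - 1 != 0 ->
  \sum_(c < q) y ^+ c = (1 - y) ^+ q.-1.
Proof.
move=> hy.
have e1 : (y - 1) ^+ q = y ^+ q - 1.
  by rewrite frobq -signr_odd oddq expr1.
have e2 : (1 - y) ^+ q.-1 = (y - 1) ^+ q.-1.
  rewrite -opprB exprNn -signr_odd.
  by rewrite -subn1 oddB ?expn_gt0 ?prime_gt0 // oddq expr0 mul1r.
apply: (mulfI hy); rewrite -subrX1 -e1 e2 -exprS prednK // expn_gt0 prime_gt0 //.
Qed.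

Lemma expand_q :
  (1 - ('X + 'X^q)) ^+ q.-1 =
  \sum_(0 <= i < q) (1 - 'X) ^+ (q.-1 - i) * 'X^(q * i) :> {poly F}.
Proof.
have q0 : (0 < q)%N by rewrite expn_gt0 prime_gt0.
transitivity (\sum_(0 <= i < q.-1.+1) (1 - 'X) ^+ (q.-1 - i) * 'X^(q * i) : {poly F}); last by rewrite prednK.
rewrite opprD addrA exprDn big_mkord; apply: eq_bigr => [[i hi]] _ /=.
rewrite -mulr_natr exprNn -exprM -mulrA; congr (_ * _).
have hi' : (i < q)%N by rewrite -(prednK q0).
have := congr1 polyC (binq1 hi'); rewrite rmorphM rmorphXn rmorphN rmorph1 rmorph_nat polyC1 => h.
by rewrite mulrC mulrA (mulrC _ ((-1) ^+ i)) h mul1r.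
Qed.

Lemma stepA (n u v K f a b : nat) :
  (u + v = f * (q - 1) + K)%N -> (K < q - 1)%N -> n = (u + v * q)%N ->
  \sum_(1 <= k < q) \sum_(0 <= j < q | [&& (k + j <= q - 1)%N,
      (2 * Posz k - Posz j == Posz (a + b) %[mod Posz (q - 1)])%Z &
      Posz q * (Posz q - 1) + Posz k - Posz j - (Posz a + Posz b * Posz q) == Posz n])
     (('C(a + b, a) * 'C(q - 1 - k, j))%:R * (-1) ^+ j : F)
  = 'C(a+b,a)%:R * coefz ((1 - 'X)^+K : {poly F})
       (Posz q * (Posz q - 1) + Posz (q - 1 - K) - Posz n - (Posz a + Posz b * Posz q)).
Proof.
move=> hN hK hn.
have q1 := q_gt1.
set k0 := (q - 1 - K)%N.
have hk0 : (1 <= k0 < q)%N by rewrite /k0; lia.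
have congE k j : Posz q * (Posz q - 1) + Posz k - Posz j - (Posz a + Posz b * Posz q) = Posz n ->
   2 * Posz k - Posz j - Posz (a + b) = (Posz k - Posz k0) + (1 + Posz f + Posz v + Posz b - Posz q) * Posz (q - 1).
  by move=> he; rewrite /k0; lia.
have cong1 j : Posz q * (Posz q - 1) + Posz k0 - Posz j - (Posz a + Posz b * Posz q) = Posz n ->
   (2 * Posz k0 - Posz j == Posz (a + b) %[mod Posz (q - 1)])%Z.
  move=> he; rewrite eqz_mod_dvd congE // subrr add0r.
  by apply/dvdzP; eexists.
have cong2 k j : (1 <= k < q)%N -> k != k0 -> Posz q * (Posz q - 1) + Posz k - Posz j - (Posz a + Posz b * Posz q) = Posz n ->
   ~~ (2 * Posz k - Posz j == Posz (a + b) %[mod Posz (q - 1)])%Z.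
  move=> hk hne he; rewrite eqz_mod_dvd congE //; apply/negP => /dvdzP [c hc].
  have h2 : Posz k - Posz k0 = (c - (1 + Posz f + Posz v + Posz b - Posz q)) * Posz (q - 1).
    by rewrite mulrBl -hc; ring.
  move: h2 hne; rewrite /k0; generalize (c - (1 + Posz f + Posz v + Posz b - Posz q)) => d h2 /eqP hne.
  have : (d <= 0 \/ 1 <= d)%R by lia.
  case=> hd.
    have : (d <= -1 \/ d = 0)%R by lia.
    case=> hd'; last by move: h2; rewrite hd' mul0r; lia.
    have : d * Posz (q - 1) <= - Posz (q - 1) by rewrite -mulN1r ler_wpM2r //.
    lia.
  have : Posz (q - 1) <= d * Posz (q - 1) by rewrite -{1}(mul1r (Posz (q - 1))) ler_wpM2r.
  lia.
transitivity (\sum_(1 <= k < q | k == k0) \sum_(0 <= j < q | [&& (k + j <= q - 1)%N,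
      (2 * Posz k - Posz j == Posz (a + b) %[mod Posz (q - 1)])%Z &
      Posz q * (Posz q - 1) + Posz k - Posz j - (Posz a + Posz b * Posz q) == Posz n])
     (('C(a + b, a) * 'C(q - 1 - k, j))%:R * (-1) ^+ j : F)).
  rewrite [RHS]big_mkcond /=; apply: eq_big_nat => k hk; case: eqP => [->//|/eqP hne].
  rewrite big_pred0 // => j; apply/negbTE; apply/and3P => [[_ hc /eqP he]].
  by move: hc; rewrite (negbTE (cong2 k j hk hne he)).
rewrite big_nat1_eq hk0.
have hq1K : (q - 1 - k0 = K)%N by rewrite /k0; lia.
set T := (X in coefz _ X).
case: (boolP ((0 <= T) && (T <= Posz K))) => hT.
  rewrite (eq_bigl (fun j => j == absz T)) ?big_nat1_eq.
    have -> : (0 <= absz T < q)%N by rewrite /T /k0 in hT *; lia.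
    rewrite coefz_1mX /binz hT absz_nat hq1K natrM; ring.
  move=> j /=; apply/idP/idP.
    by case/and3P => h1 _ /eqP he; rewrite /T /k0 in hT *; lia.
  move/eqP=> hj; apply/and3P; split.
  - by rewrite /T /k0 in hT hj *; lia.
  - by apply: cong1; rewrite /T /k0 in hT hj *; lia.
  - by apply/eqP; rewrite /T /k0 in hT hj *; lia.
rewrite big_pred0; first by rewrite coefz_1mX /binz (negbTE hT) !mulr0.
move=> j; apply/negbTE/negP => /and3P [h1 _ /eqP he].
by move: hT; rewrite /T /k0 in he h1 *; lia.
Qed.

Section L.
Variables (K : nat) (D : int).
Definition Lf (P : {poly F}) := coefz (P * (1 - 'X)^+K) D.

Lemma Lf_sum (I : Type) (r : seq I) (P : pred I) (G : I -> {poly F}) :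
  Lf (\sum_(i <- r | P i) G i) = \sum_(i <- r | P i) Lf (G i).
Proof. by rewrite /Lf mulr_suml coefz_sum. Qed.

Lemma Lf_Mn P k : Lf (P *+ k) = Lf P *+ k.
Proof. by rewrite /Lf mulrnAl coefzMn. Qed.

Lemma Lf_Xn e : Lf 'X^e = coefz ((1 - 'X)^+K : {poly F}) (D - e%:Z).
Proof. by rewrite /Lf coefzXnM. Qed.

Lemma Lf_XnM a e : Lf ((1 - 'X)^+a * 'X^e) = coefz ((1 - 'X)^+(a + K) : {poly F}) (D - e%:Z).
Proof. by rewrite /Lf -mulrA (mulrC 'X^e) mulrA -exprD mulrC coefzXnM. Qed.

Lemma stepB :
  \sum_(0 <= a < q) \sum_(0 <= b < q | [&& (b <= q - 2)%N, (0 < a + b)%N & (a + b <= q - 1)%N])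
     'C(a + b, a)%:R * Lf 'X^(a + b * q)
  = \sum_(0 <= i < q.-1) coefz ((1 - 'X)^+(q.-1 - i + K) : {poly F}) (D - (q * i)%N%:Z) - Lf 1.
Proof.
have q1 := q_gt1.
rewrite (filt_split (fun a b => 'C(a + b, a)%:R * Lf 'X^(a + b * q))) //.
have -> : \sum_(0 <= a < q) \sum_(0 <= b < q | (a + b < q)%N) 'C(a + b, a)%:R * Lf 'X^(a + b * q)
   = \sum_(0 <= c < q) \sum_(0 <= i < c.+1) 'C(c, i)%:R * Lf 'X^(i + (c - i) * q).
  rewrite triangle; apply: eq_bigr => a _; apply: eq_bigr => b _.
  by rewrite addKn.
have -> : \sum_(0 <= c < q) \sum_(0 <= i < c.+1) 'C(c, i)%:R * Lf 'X^(i + (c - i) * q)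
   = Lf (\sum_(c < q) ('X^q + 'X) ^+ c).
  rewrite Lf_sum big_mkord; apply: eq_bigr => c _.
  rewrite exprDn Lf_sum big_mkord; apply: eq_bigr => i _.
  rewrite Lf_Mn -exprM -exprD mulr_natl; congr (Lf 'X^_ *+ _); lia.
rewrite geomq; last first.
  apply/eqP => /(congr1 (fun P : {poly F} => P`_1)).
  rewrite coefB coefD coefXn coefX coef1 /=.
  have -> : (1 == q)%N = false by lia.
  by rewrite add0r subr0 coef0 => /eqP; rewrite oner_eq0.
rewrite (addrC 'X^q) expand_q Lf_sum.
rewrite (big_nat_recr' _ (ltnW q1)) /=.
under eq_bigr => i _ do rewrite Lf_XnM.
rewrite subnn add0n Lf_XnM !add0n !bin0 !mul1r expr0 (Lf_Xn ((q - 1) * q)).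
rewrite (_ : (q - 1) * q = q * q.-1)%N; last by rewrite mulnC subn1.
ring.
Qed.
End L.
End Fp.

Lemma sign_shift (F : fieldType) (x y w : int) : x = y + 2 * w -> (-1 : F) ^ x = (-1) ^ y.
Proof.
move=> ->; rewrite expfzDr ?oppr_eq0 ?oner_eq0 // -exprz_exp.
have -> : (-1 : F) ^ 2 = 1 by rewrite (_ : 2 = Posz 2) // -exprnP expr2 mulrNN mulr1.
by rewrite exp1rz mulr1.
Qed.

Lemma sign_pos (F : fieldType) (t : int) : 0 <= t -> (-1 : F) ^+ (absz t) = (-1) ^ t.
Proof. by move=> h; case: t h. Qed.

Lemma irange3 : irange (-1) 1 = [:: -1; 0; 1].
Proof. by []. Qed.

Lemma irange4 : irange (-2) 1 = [:: -2; -1; 0; 1].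
Proof. by []. Qed.

Lemma floor_char (d : int) (Q N f K : nat) : (0 < Q)%N -> N = (f*Q + K)%N -> (K < Q)%N ->
  (d * Q <= N) && (N%:Z < (d+1)*Q) = (d == f).
Proof.
move=> h1 h2 h3; apply/idP/idP.
  by move/andP=> [a b]; apply/eqP; nia.
by move/eqP=> ->; apply/andP; split; nia.
Qed.

Section Part2.
Variables (F : fieldType) (q u v f K h : nat).
Hypotheses (hq : q = (2 * h + 1)%N) (h1 : (1 <= h)%N) (hN : (u + v = f * (q - 1) + K)%N)
  (hK : (K < q - 1)%N) (hu : (u <= q - 1)%N) (hv : (v <= q - 1)%N).
Let r : rat := (u + v)%:R / (q - 1)%:R.

Lemma rle (z : int) : (z%:~R <= r) = (z * (q - 1)%N <= (u + v)%N).
Proof.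
have hQ : (0 : rat) < (q - 1)%:R by rewrite ltr0n; lia.
rewrite /r ler_pdivlMr //.
rewrite (_ : ((u + v)%N%:R : rat) = (Posz (u + v))%:~R) // (_ : ((q - 1)%N%:R : rat) = (Posz (q - 1))%:~R) //.
by rewrite -intrM ler_int.
Qed.

Lemma rlt (z : int) : (r < z%:~R) = ((u + v)%N%:Z < z * (q - 1)%N).
Proof.
have hQ : (0 : rat) < (q - 1)%:R by rewrite ltr0n; lia.
rewrite /r ltr_pdivrMr //.
rewrite (_ : ((u + v)%N%:R : rat) = (Posz (u + v))%:~R) // (_ : ((q - 1)%N%:R : rat) = (Posz (q - 1))%:~R) //.
by rewrite -intrM ltr_int.
Qed.

Lemma hQ : (0 < q - 1)%N. Proof. lia. Qed.

Lemma filt1 (s e : int) :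
  (Num.max (s%:~R - r) (Posz v - Posz q + 1)%:~R <= e%:~R) && (e%:~R < Num.min (s%:~R - r + 1) (v%:R : rat))
  = [&& s - e == f, Posz v - Posz q + 1 <= e & e < Posz v].
Proof.
rewrite ge_max lt_min ler_int.
rewrite (_ : (v%:R : rat) = (Posz v)%:~R) // ltr_int.
have -> : (s%:~R - r <= e%:~R) = ((s - e)%:~R <= r).
  by rewrite ?rmorphD ?rmorphB ?rmorphN ?rmorph1 /=; apply/idP/idP => ?; lra.
have -> : (e%:~R < s%:~R - r + 1) = (r < (s - e + 1)%:~R).
  by rewrite ?rmorphD ?rmorphB ?rmorphN ?rmorph1 /=; apply/idP/idP => ?; lra.
rewrite rle rlt.
rewrite -(floor_char (s - e) hQ hN hK).
by case: (_ <= _); case: (_ <= _); case: (_ < _); case: (_ < _).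
Qed.

Lemma filt2 (s : int) :
  (Num.max (-2) ((Posz v)%:~R - (Posz q)%:~R + r) < s%:~R) && (s%:~R <= Num.min 1 ((Posz v)%:~R - (Posz q)%:~R + r + 1))
  = [&& s - Posz v + Posz q - 1 == f, -2 < s & s <= 1].
Proof.
rewrite gt_max le_min (_ : (-2 : rat) = (-2 : int)%:~R) // (_ : (1 : rat) = (1 : int)%:~R) // ltr_int ler_int.
have -> : ((Posz v)%:~R - (Posz q)%:~R + r < s%:~R) = (r < (s - Posz v + Posz q - 1 + 1)%:~R).
  by rewrite ?rmorphD ?rmorphB ?rmorphN ?rmorph1 /=; apply/idP/idP => ?; lra.
have -> : (s%:~R <= (Posz v)%:~R - (Posz q)%:~R + r + 1) = ((s - Posz v + Posz q - 1)%:~R <= r).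
  by rewrite ?rmorphD ?rmorphB ?rmorphN ?rmorph1 /=; apply/idP/idP => ?; lra.
rewrite rle rlt.
rewrite -(floor_char (s - Posz v + Posz q - 1) hQ hN hK).
by case: (_ <= _); case: (_ <= _); case: (_ < _); case: (_ < _).
Qed.

Definition tE (e : int) : int := (1 - e) * (Posz q - 1) - Posz u - Posz K - e.
Definition lhsE (e : int) : F := (-1) ^+ (absz (tE e)) * (binz (Posz K + Posz v - e) (tE e))%:R.
Definition Tse (s e : int) : F := (-1) ^ (Posz v + e) *
        (binz (Posz u + 2 * Posz v - (s - e) * (Posz q - 1) - e)
              ((s - 2 * e + 1) * (Posz q - 1) - 2 * Posz u - Posz v - e))%:R.

Lemma hN' : Posz u + Posz v = Posz f * (Posz q - 1) + Posz K.
Proof.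
have e1 : Posz q - 1 = Posz (q - 1) by lia.
rewrite e1 -PoszM -!PoszD; congr Posz; exact: hN.
Qed.

Lemma hf2 : (f <= 2)%N.
Proof. have := hN'; nia. Qed.

Lemma Tf s e : s - e = Posz f -> Tse s e = lhsE e.
Proof.
move=> hse; have := hN'; move=> hN2.
rewrite /Tse /lhsE hse.
have -> : s = e + Posz f by lia.
have -> : Posz u + 2 * Posz v - Posz f * (Posz q - 1) - e = Posz K + Posz v - e by lia.
have -> : (e + Posz f - 2 * e + 1) * (Posz q - 1) - 2 * Posz u - Posz v - e = tE e by rewrite /tE; lia.
rewrite /binz; case: ifP => [/andP [ht _] | _]; last by rewrite !mulr0.
rewrite sign_pos //; congr (_ * _); apply: (@sign_shift _ _ _ ((Posz f - 1 + e) * Posz h + Posz K + e)).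
have hq' : Posz q = 2 * Posz h + 1 by lia.
by rewrite /tE hq'; rewrite hq' in hN2; lia.
Qed.

Lemma lhs_zero e : Posz v - Posz q + 1 <= e -> e <= Posz v - 1 ->
  (e + Posz f < -1) || (1 < e + Posz f) -> ~~ ((f == 2%N) && (e == 0)) -> lhsE e = 0.
Proof.
move=> he1 he2 hef hsp; have hN2 := hN'; have hf := hf2.
rewrite /lhsE /binz ifF ?mulr0 //; apply/negbTE; rewrite /tE.
apply/negP => /andP [ht1 ht2].
have : (e <= -1) \/ e = 0 \/ (1 <= e) by lia.
case=> [he | [he | he]].
- have : (e <= -3) \/ (e = -2) \/ (e = -1) by lia.
  case=> [he' | [he' | he']].
  + have : e * (Posz q - 1) <= -3 * (Posz q - 1) by rewrite ler_wpM2r //; lia.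
    lia.
  + by rewrite he' in ht1 ht2 hef; lia.
  + by rewrite he' in ht1 ht2 hef; lia.
- by rewrite he in ht1 ht2 hef hsp; move: hsp; case: eqP => ? /=; lia.
- have : 1 * (Posz q - 1) <= e * (Posz q - 1) by rewrite ler_wpM2r //; lia.
  lia.
Qed.

Lemma perE e : Posz v - Posz q + 1 <= e -> e <= Posz v - 1 -> ~~ ((f == 2%N) && (e == 0)) ->
  \sum_(s <- irange (-1) 1 | (Num.max (s%:~R - r) (Posz v - Posz q + 1)%:~R <= e%:~R)
         && (e%:~R < Num.min (s%:~R - r + 1) (v%:R : rat))) Tse s e = lhsE e.
Proof.
move=> he1 he2 hsp.
rewrite irange3 !big_cons big_nil !filt1 he1 (_ : e < Posz v) ?andbT; last by lia.
have : (e + Posz f = -1) \/ (e + Posz f = 0) \/ (e + Posz f = 1) \/ ((e + Posz f < -1) || (1 < e + Posz f)) by lia.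
case=> [h0 | [h0 | [h0 | h0]]].
- rewrite (_ : (-1 - e == Posz f) = true); last by apply/eqP; lia.
  rewrite (_ : (0 - e == Posz f) = false); last by apply/negbTE/eqP; lia.
  rewrite (_ : (1 - e == Posz f) = false); last by apply/negbTE/eqP; lia.
  by rewrite /= ?addr0 Tf //; lia.
- rewrite (_ : (-1 - e == Posz f) = false); last by apply/negbTE/eqP; lia.
  rewrite (_ : (0 - e == Posz f) = true); last by apply/eqP; lia.
  rewrite (_ : (1 - e == Posz f) = false); last by apply/negbTE/eqP; lia.
  by rewrite /= ?addr0 Tf //; lia.
- rewrite (_ : (-1 - e == Posz f) = false); last by apply/negbTE/eqP; lia.
  rewrite (_ : (0 - e == Posz f) = false); last by apply/negbTE/eqP; lia.
  rewrite (_ : (1 - e == Posz f) = true); last by apply/eqP; lia.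
  by rewrite /= ?addr0 Tf //; lia.
- rewrite (_ : (-1 - e == Posz f) = false); last by apply/negbTE/eqP; lia.
  rewrite (_ : (0 - e == Posz f) = false); last by apply/negbTE/eqP; lia.
  rewrite (_ : (1 - e == Posz f) = false); last by apply/negbTE/eqP; lia.
  by rewrite /= lhs_zero.
Qed.

Lemma mem_irange a b e : a <= b + 1 -> e \in irange a b -> (a <= e) && (e <= b).
Proof.
move=> hab.
rewrite /irange => /mapP [i hi ->].
have {}hi : (i < absz (b - a + 1)%R)%N by move: hi; rewrite mem_iota add0n => /andP [].
move: (i : nat) hi => j hj; clear -hab hj; lia.
Qed.

Definition Dz : int := Posz q * (Posz q - 1) + Posz (q - 1 - K) - (Posz u + Posz v * Posz q).

Lemma lhs_reindex :
  \sum_(0 <= i < q.-1) coefz ((1 - 'X)^+(q.-1 - i + K) : {poly F}) (Dz - (q * i)%N%:Z)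
  = \sum_(e <- irange (Posz v - Posz q + 1) (Posz v - 1)) lhsE e.
Proof.
rewrite /irange big_map (_ : absz _ = q.-1); last by lia.
rewrite /index_iota subn0; apply: eq_big_seq => i; rewrite mem_iota add0n => /andP [_ hi].
rewrite coefz_1mX /lhsE.
have -> : Dz - (q * i)%N%:Z = tE (Posz v - Posz q + 1 + Posz i) by rewrite /Dz /tE; lia.
by congr (_ * (binz _ _)%:R); lia.
Qed.

Lemma Dz_sign : 0 <= Dz -> (-1 : F) ^+ (absz Dz) = 1.
Proof.
move=> h0; rewrite sign_pos // (@sign_shift _ _ 0 (Posz h * (2 * Posz h + 1) + Posz h - Posz K - Posz h * Posz f - Posz h * Posz v)) //.
have hN2 := hN'; have hq' : Posz q = 2 * Posz h + 1 by lia.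
have e1 : Posz (q - 1 - K) = Posz q - 1 - Posz K by lia.
by rewrite /Dz e1 hq'; rewrite hq' in hN2; lia.
Qed.

Definition Bs (s : int) : F := (binz (Posz u + Posz v - (s - Posz v + Posz q - 1) * (Posz q - 1))
            ((s - 2 * Posz v + 2 * Posz q) * (Posz q - 1) - 2 * (Posz u + Posz v)))%:R.

Lemma R2 : \sum_(s <- irange (-2) 1 |
         (Num.max (-2) ((Posz v)%:~R - (Posz q)%:~R + r) < s%:~R)
         && (s%:~R <= Num.min 1 ((Posz v)%:~R - (Posz q)%:~R + r + 1))) Bs s
  = (-1) ^+ (absz Dz) * (binz (Posz K) Dz)%:R - (if f == 2%N then 1 else 0).
Proof.
have hN2 := hN'; have hf := hf2.
have eK : forall s, s - Posz v + Posz q - 1 = Posz f -> Bs s = (binz (Posz K) Dz)%:R.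
  move=> s hs; rewrite /Bs hs.
  have -> : s = Posz f + Posz v - Posz q + 1 by lia.
  have e1 : Posz (q - 1 - K) = Posz q - 1 - Posz K by lia.
  by congr ((binz _ _)%:R); rewrite /Dz ?e1; lia.
have X1 : (Posz v - Posz q + 1 + Posz f = -1) \/ (Posz v - Posz q + 1 + Posz f = 0) \/
          (Posz v - Posz q + 1 + Posz f = 1) -> (-1) ^+ (absz Dz) * (binz (Posz K) Dz)%:R = (binz (Posz K) Dz)%:R :> F.
  move=> hg; rewrite /binz; case: ifP => [/andP [hD _]|]; last by rewrite mulr0.
  by rewrite Dz_sign // mul1r.
have hf2' : (Posz v - Posz q + 1 + Posz f = -1) \/ (Posz v - Posz q + 1 + Posz f = 0) \/
          (Posz v - Posz q + 1 + Posz f = 1) -> (f == 2%N) = false.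
  by move=> hg; apply/negbTE/eqP => hf2e; rewrite hf2e in hN2; lia.
rewrite irange4 !big_cons big_nil !filt2 /=.
have : (Posz v - Posz q + 1 + Posz f = -1) \/ (Posz v - Posz q + 1 + Posz f = 0) \/
       (Posz v - Posz q + 1 + Posz f = 1) \/ (Posz v - Posz q + 1 + Posz f <= -2) \/
       (Posz v - Posz q + 1 + Posz f = 2) by lia.
case=> [hg|[hg|[hg|[hg|hg]]]].
- rewrite (_ : (-2 - Posz v + Posz q - 1 == Posz f) = false); last by apply/negbTE/eqP; lia.
  rewrite (_ : (-1 - Posz v + Posz q - 1 == Posz f) = true); last by apply/eqP; lia.
  rewrite (_ : (0 - Posz v + Posz q - 1 == Posz f) = false); last by apply/negbTE/eqP; lia.
  rewrite (_ : (1 - Posz v + Posz q - 1 == Posz f) = false); last by apply/negbTE/eqP; lia.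
  by rewrite /= addr0 eK ?X1 ?hf2' ?subr0 //; lia.
- rewrite (_ : (-2 - Posz v + Posz q - 1 == Posz f) = false); last by apply/negbTE/eqP; lia.
  rewrite (_ : (-1 - Posz v + Posz q - 1 == Posz f) = false); last by apply/negbTE/eqP; lia.
  rewrite (_ : (0 - Posz v + Posz q - 1 == Posz f) = true); last by apply/eqP; lia.
  rewrite (_ : (1 - Posz v + Posz q - 1 == Posz f) = false); last by apply/negbTE/eqP; lia.
  by rewrite /= addr0 eK ?X1 ?hf2' ?subr0 //; lia.
- rewrite (_ : (-2 - Posz v + Posz q - 1 == Posz f) = false); last by apply/negbTE/eqP; lia.
  rewrite (_ : (-1 - Posz v + Posz q - 1 == Posz f) = false); last by apply/negbTE/eqP; lia.
  rewrite (_ : (0 - Posz v + Posz q - 1 == Posz f) = false); last by apply/negbTE/eqP; lia.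
  rewrite (_ : (1 - Posz v + Posz q - 1 == Posz f) = true); last by apply/eqP; lia.
  by rewrite /= addr0 eK ?X1 ?hf2' ?subr0 //; lia.
- rewrite (_ : [&& (-2 : int) - Posz v + Posz q - 1 == Posz f, (-2 : int) < -2 & (-2 : int) <= 1] = false); last by apply/negbTE/negP => /and3P [_ ? _]; lia.
  rewrite (_ : (-1 - Posz v + Posz q - 1 == Posz f) = false); last by apply/negbTE/eqP; lia.
  rewrite (_ : (0 - Posz v + Posz q - 1 == Posz f) = false); last by apply/negbTE/eqP; lia.
  rewrite (_ : (1 - Posz v + Posz q - 1 == Posz f) = false); last by apply/negbTE/eqP; lia.
  rewrite /= (_ : f == 2%N = false); last by apply/negbTE/eqP => hf2e; rewrite hf2e in hN2 hg; lia.
  have hB : (Posz f + 2) * Posz q <= (Posz q - 1 - Posz v) * Posz q by rewrite ler_wpM2r //; lia.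
  have e1 : Posz (q - 1 - K) = Posz q - 1 - Posz K by lia.
  rewrite /binz (_ : (0 <= Dz) && (Dz <= Posz K) = false) ?mulr0 ?subr0 //.
  by apply/negbTE/negP => /andP [_ hD]; move: hD; rewrite /Dz e1; lia.
- rewrite (_ : (-2 - Posz v + Posz q - 1 == Posz f) = false); last by apply/negbTE/eqP; lia.
  rewrite (_ : (-1 - Posz v + Posz q - 1 == Posz f) = false); last by apply/negbTE/eqP; lia.
  rewrite (_ : (0 - Posz v + Posz q - 1 == Posz f) = false); last by apply/negbTE/eqP; lia.
  rewrite (_ : (1 - Posz v + Posz q - 1 == Posz f) = false); last by apply/negbTE/eqP; lia.
  have ef : f = 2%N by lia.
  have ev : v = (q - 1)%N by lia.
  have eu : u = (q - 1)%N by rewrite ef ev in hN2; lia.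
  have eK0 : K = 0%N by rewrite ef ev in hN2; lia.
  have eD : Dz = 0 by rewrite /Dz eu ev eK0; lia.
  by rewrite /= ef eD eK0 /binz /= bin0 expr0 mul1r subrr.
Qed.

Lemma irange_cons (a b : int) : a <= b -> irange a b = a :: irange (a + 1) b.
Proof.
move=> hab; rewrite /irange.
have -> : absz (b - a + 1) = (absz (b - (a + 1) + 1)).+1 by lia.
rewrite /= addr0; congr (_ :: _).
rewrite (iotaDl 1 0) -map_comp; apply: eq_map => i /=; lia.
Qed.

Lemma R1 :
  \sum_(e <- irange (Posz v - Posz q + 1) (Posz v - 1))
     \sum_(s <- irange (-1) 1 | (Num.max (s%:~R - r) (Posz v - Posz q + 1)%:~R <= e%:~R)
         && (e%:~R < Num.min (s%:~R - r + 1) (v%:R : rat))) Tse s e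
  = \sum_(e <- irange (Posz v - Posz q + 1) (Posz v - 1)) lhsE e - (if f == 2%N then 1 else 0).
Proof.
have hN2 := hN'; have hf := hf2.
case: ifP => hf2e.
  have ef : f = 2%N by apply/eqP.
  have ev : v = (q - 1)%N by lia.
  have eu : u = (q - 1)%N by rewrite ef ev in hN2; lia.
  have eK0 : K = 0%N by rewrite ef ev in hN2; lia.
  have e0 : Posz v - Posz q + 1 = 0 by lia.
  rewrite irange_cons; last by lia.
  rewrite big_cons [in RHS]big_cons.
  rewrite big1_seq; last first.
    move=> s /andP [hs hm].
    move: hs; rewrite filt1 => /and3P [hs _ _]; move: hm; rewrite irange3 !inE => hm.
    by exfalso; lia.
  have -> : lhsE (Posz v - Posz q + 1) = 1.
    rewrite e0 /lhsE /tE eu eK0.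
    have -> : (1 - 0) * (Posz q - 1) - Posz (q - 1) - Posz 0 - 0 = 0 by lia.
    by rewrite /binz lexx /= bin0 expr0 mul1r.
  rewrite add0r (addrC 1) addrK; apply: eq_big_seq => e /mem_irange he.
  have he' : (Posz v - Posz q + 1 + 1 <= e) && (e <= Posz v - 1) by apply: he; lia.
  by apply: perE; lia.
rewrite subr0; apply: eq_big_seq => e /mem_irange he.
have he' : (Posz v - Posz q + 1 <= e) && (e <= Posz v - 1) by apply: he; lia.
by apply: perE; try lia; rewrite hf2e.
Qed.
End Part2.
Unset Implicit Arguments.
Set Strict Implicit.

Theorem lemma4p3 (p m q n u v : nat)
  (hp : prime p) (hodd : odd p) (hm : (0 < m)%N) (hq : q = (p ^ m)%N)
  (hn1 : (1 <= n)%N) (hn2 : (n <= q ^ 2 - 1)%N)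
  (hu : (u <= q - 1)%N) (hv : (v <= q - 1)%N) (huv : n = (u + v * q)%N) :
  let r : rat := (u + v)%:R / (q - 1)%:R in
  (\sum_(0 <= a < q) \sum_(0 <= b < q | [&& (b <= q - 2)%N, (0 < a + b)%N & (a + b <= q - 1)%N])
     \sum_(1 <= k < q) \sum_(0 <= j < q |
         [&& (k + j <= q - 1)%N,
             ((2 * k%:Z - j%:Z) == (a + b)%:Z %[mod (q - 1)%:Z])%Z &
             (q%:Z * (q%:Z - 1) + k%:Z - j%:Z - (a%:Z + b%:Z * q%:Z) == n%:Z)])
       (('C(a + b, a) * 'C(q - 1 - k, j))%:R * (-1) ^+ j : 'F_p))
  =
  (\sum_(s <- irange (-1) 1)
     \sum_(e <- irange (v%:Z - q%:Z + 1) (v%:Z - 1) |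
         (Num.max (s%:~R - r) (v%:Z - q%:Z + 1)%:~R <= e%:~R)
         && (e%:~R < Num.min (s%:~R - r + 1) v%:R))
       ((-1) ^ (v%:Z + e) *
        (binz (u%:Z + 2 * v%:Z - (s - e) * (q%:Z - 1) - e)
              ((s - 2 * e + 1) * (q%:Z - 1) - 2 * u%:Z - v%:Z - e))%:R : 'F_p))
  -
  (\sum_(s <- irange (-2) 1 |
         (Num.max (-2) (v%:~R - q%:~R + r) < s%:~R)
         && (s%:~R <= Num.min 1 (v%:~R - q%:~R + r + 1)))
     ((binz (u%:Z + v%:Z - (s - v%:Z + q%:Z - 1) * (q%:Z - 1))
            ((s - 2 * v%:Z + 2 * q%:Z) * (q%:Z - 1) - 2 * (u%:Z + v%:Z)))%:R : 'F_p)).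
Proof.
move=> r.
have q1 : (1 < q)%N by rewrite hq; exact: q_gt1.
have hoddq : odd q by rewrite hq; exact: oddq.
set h := q./2.
have hqh : q = (2 * h + 1)%N by rewrite /h -[in LHS](odd_double_half q) hoddq -muln2; lia.
have h1 : (0 < h)%N by lia.
set f := ((u + v) %/ (q - 1))%N.
set K := ((u + v) %% (q - 1))%N.
have hN : (u + v = f * (q - 1) + K)%N by rewrite /f /K -divn_eq.
have hK : (K < q - 1)%N by rewrite /K ltn_pmod //; lia.
subst q.
under eq_bigr => a _ do under eq_bigr => b _ do rewrite (stepA hp hodd hm a b hN hK huv).
set D : int := _ * _ + _ - _.
under eq_bigr => a _ do under eq_bigr => b _ do rewrite -PoszM -PoszD -Lf_Xn.
rewrite (stepB hp hodd hm).
have eD : D = Dz (p ^ m) u v K by rewrite /D /Dz huv PoszD PoszM.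
rewrite eD (lhs_reindex _ hqh h1 hN hK hu hv) /Lf mul1r coefz_1mX.
rewrite /r (exchange_big_dep xpredT) //=.
rewrite (R1 _ hqh h1 hN hK hu hv).
rewrite (R2 _ hqh h1 hN hK hu hv).
ring.
Qed.
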